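(* Let $n\ge2$ and let $f:\mathbb R^n\to\mathbb R^n$ be a continuous injective map such that $\overline{f(A^\circ)}=\big(\overline{f(A)}\big)^\circ$ for every $A\in\mathcal K_0^n$. Then $f$ is an orthogonal linear map.
   Context: $\mathcal K_0^n$: closed convex subsets of $\mathbb R^n$ containing $0$. Polar: $A^\circ=\{x:\sup_{a\in A}\langle a,x\rangle\le1\}$. $f(A)=\{f(a):a\in A\}$ and the bar denotes topological closure in $\mathbb R^n$. *)

(* Defs.v *)
From HB Require Import structures.
From mathcomp Require Import all_boot all_order all_algebra.
From mathcomp Require Import all_classical all_reals all_analysis.
Set Implicit Arguments. Unset Strict Implicit. Unset Printing Implicit Defensive.
Import Order.TTheory GRing.Theory Num.Theory.
Import numFieldNormedType.Exports.
Local Open Scope classical_set_scope.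
Local Open Scope ring_scope.

(* R^n is modelled as row vectors 'rV[R]_n with the standard inner product. *)
Definition dotv (R : realType) (n : nat) (u v : 'rV[R]_n) : R :=
  \sum_(i < n) u ord0 i * v ord0 i.

Definition polar (R : realType) (n : nat) (A : set 'rV[R]_n) : set 'rV[R]_n :=
  [set x | forall a, A a -> dotv a x <= 1].

Definition convex_set_rV (R : realType) (n : nat) (A : set 'rV[R]_n) : Prop :=
  forall x y (t : R), A x -> A y -> 0 <= t -> t <= 1 ->
    A ((1 - t) *: x + t *: y).

Definition K0 (R : realType) (n : nat) (A : set 'rV[R]_n) : Prop :=
  closed A /\ convex_set_rV A /\ A 0.

Definition orthogonal_linear (R : realType) (n : nat)
  (f : 'rV[R]_n -> 'rV[R]_n) : Prop :=
  exists M : 'M[R]_n, M *m M^T = 1%:M /\ forall x, f x = x *m M.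

(* Main.v *)
Require Import Defs.
From HB Require Import structures.
From mathcomp Require Import all_boot all_order all_algebra.
From mathcomp Require Import all_classical all_reals all_analysis.
From mathcomp Require Import ring lra.
Import Order.TTheory GRing.Theory Num.Theory.
Import numFieldNormedType.Exports.
Local Open Scope classical_set_scope.
Local Open Scope ring_scope.
Set Implicit Arguments. Unset Strict Implicit. Unset Printing Implicit Defensive.

Lemma dotvC (R : realType) n (u v : 'rV[R]_n) : dotv u v = dotv v u.
Proof. by apply: eq_bigr => i _; rewrite mulrC. Qed.

Lemma dotvDr (R : realType) n (u v w : 'rV[R]_n) :
  dotv u (v + w) = dotv u v + dotv u w.
Proof. by rewrite /dotv -big_split; apply: eq_bigr => i _; rewrite mxE mulrDr. Qed.

Lemma dotvZr (R : realType) n (u v : 'rV[R]_n) (k : R) :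
  dotv u (k *: v) = k * dotv u v.
Proof. by rewrite /dotv mulr_sumr; apply: eq_bigr => i _; rewrite mxE mulrCA. Qed.

Lemma dotvNr (R : realType) n (u v : 'rV[R]_n) : dotv u (- v) = - dotv u v.
Proof. by rewrite -scaleN1r dotvZr mulN1r. Qed.

Lemma dotvBr (R : realType) n (u v w : 'rV[R]_n) :
  dotv u (v - w) = dotv u v - dotv u w.
Proof. by rewrite dotvDr dotvNr. Qed.

Lemma dotvDl (R : realType) n (u v w : 'rV[R]_n) :
  dotv (v + w) u = dotv v u + dotv w u.
Proof. by rewrite dotvC dotvDr !(dotvC u). Qed.

Lemma dotvZl (R : realType) n (u v : 'rV[R]_n) (k : R) :
  dotv (k *: v) u = k * dotv v u.
Proof. by rewrite dotvC dotvZr dotvC. Qed.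

Lemma dotvNl (R : realType) n (u v : 'rV[R]_n) : dotv (- v) u = - dotv v u.
Proof. by rewrite dotvC dotvNr dotvC. Qed.

Lemma dotvBl (R : realType) n (u v w : 'rV[R]_n) :
  dotv (v - w) u = dotv v u - dotv w u.
Proof. by rewrite dotvDl dotvNl. Qed.

Lemma dotv0r (R : realType) n (u : 'rV[R]_n) : dotv u 0 = 0.
Proof. by rewrite /dotv big1 // => i _; rewrite mxE mulr0. Qed.

Lemma dotv0l (R : realType) n (u : 'rV[R]_n) : dotv 0 u = 0.
Proof. by rewrite dotvC dotv0r. Qed.

Lemma dotv_ge0 (R : realType) n (u : 'rV[R]_n) : 0 <= dotv u u.
Proof. by apply: sumr_ge0 => i _; by rewrite -expr2 sqr_ge0. Qed.

Lemma dotv_eq0 (R : realType) n (u : 'rV[R]_n) : dotv u u = 0 -> u = 0.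
Proof.
move=> /eqP; rewrite psumr_eq0; last by move=> i _; by rewrite -expr2 sqr_ge0.
move=> /allP H; apply/rowP => i; rewrite mxE.
by have := H i (mem_index_enum i); rewrite mulf_eq0 orbb => /eqP.
Qed.

Lemma dotv_gt0 (R : realType) n (u : 'rV[R]_n) : u != 0 -> 0 < dotv u u.
Proof.
move=> u0; rewrite lt_neqAle dotv_ge0 andbT; apply/eqP => /esym /dotv_eq0.
by move/eqP: u0.
Qed.

Lemma dotv_mx (R : realType) n (u v : 'rV[R]_n) : dotv u v = (u *m v^T) ord0 ord0.
Proof. by rewrite /dotv mxE; apply: eq_bigr => i _; rewrite mxE. Qed.

Lemma coord_le_norm (R : realType) n (u : 'rV[R]_n) i : `|u ord0 i| <= `|u|.
Proof.
have /mapP[j Hj ->] : `|u ord0 i| \in [seq `|u x.1 x.2| | x : 'I_1 * 'I_n].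
  by apply/mapP; exists (ord0, i) => //=; rewrite mem_enum.
by rewrite [leRHS]/Num.Def.normr /= mx_normrE; apply/bigmax_geP; right => /=; exists j.
Qed.

Lemma norm_le_coord (R : realType) n (u : 'rV[R]_n) (c : R) :
  0 <= c -> (forall i, `|u ord0 i| <= c) -> `|u| <= c.
Proof.
move=> c0 H; rewrite [leLHS]/Num.Def.normr /= mx_normrE; apply/bigmax_leP; split => //.
by move=> [i j] _ /=; rewrite (ord1 i); exact: H.
Qed.

Lemma dotv_bound (R : realType) n (u v : 'rV[R]_n) :
  `|dotv u v| <= n%:R * (`|u| * `|v|).
Proof.
rewrite /dotv; apply: le_trans (ler_norm_sum _ _ _) _.
rewrite (_ : n%:R * _ = \sum_(i < n) (`|u| * `|v|)); last first.
  by rewrite sumr_const card_ord mulr_natl.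
by apply: ler_sum => i _; rewrite normrM ler_pM // coord_le_norm.
Qed.

Lemma dotv_cont (R : realType) n (a : 'rV[R]_n) : continuous (dotv a).
Proof.
move=> x; apply/(@cvgrPdist_lt _ _ _ (nbhs x) _ (dotv a)) => e e0.
have C0 : 0 < n%:R * `|a| + 1 by rewrite ltr_wpDl // mulr_ge0.
rewrite -(@nbhs_nbhs_norm R 'rV[R]_n); exists (e / (n%:R * `|a| + 1)).
  by rewrite /= divr_gt0.
move=> y /= xy; rewrite -dotvBr; apply: le_lt_trans (dotv_bound _ _) _.
rewrite mulrA; apply: (@le_lt_trans _ _ ((n%:R * `|a| + 1) * `|x - y|)).
  by rewrite ler_wpM2r // lerDl.
by rewrite mulrC -ltr_pdivlMr.
Qed.

Lemma polar_closed (R : realType) n (S : set 'rV[R]_n) : closed (polar S).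
Proof.
have -> : polar S = \bigcap_(a in S) [set x | dotv a x <= 1].
  by rewrite predeqE => x; split => [H a Sa|H a Sa]; [exact: H|exact: H].
apply: closed_bigI => a _.
have -> : [set x | dotv a x <= 1] = dotv a @^-1` [set r | r <= 1] by [].
by apply: preimage_closed; [move=> x _; exact: dotv_cont | exact: closed_le].
Qed.

Lemma polar_convex (R : realType) n (S : set 'rV[R]_n) : convex_set_rV (polar S).
Proof.
move=> x y t Hx Hy t0 t1 a Sa.
rewrite dotvDr !dotvZr.
have := Hx a Sa; have := Hy a Sa => h1 h2.
have : (1 - t) * dotv a x <= (1 - t) by rewrite ler_piMr // subr_ge0.
have : t * dotv a y <= t by rewrite ler_piMr.
lra.
Qed.

Lemma polar0 (R : realType) n (S : set 'rV[R]_n) : polar S 0.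
Proof. by move=> a _; rewrite dotv0r ler01. Qed.

Lemma K0_polar (R : realType) n (S : set 'rV[R]_n) : K0 (polar S).
Proof. by split; [exact: polar_closed|split; [exact: polar_convex|exact: polar0]]. Qed.

Lemma polar_anti (R : realType) n (S T : set 'rV[R]_n) : S `<=` T -> polar T `<=` polar S.
Proof. by move=> ST x Hx a Sa; apply: Hx; exact: ST. Qed.

Lemma polar_closure (R : realType) n (S : set 'rV[R]_n) : polar (closure S) = polar S.
Proof.
rewrite predeqE => x; split; first by apply: polar_anti; exact: subset_closure.
move=> Hx a Sa.
have cl : closed [set a | dotv a x <= 1].
  have -> : [set a | dotv a x <= 1] = (fun a => dotv x a) @^-1` [set r | r <= 1].
    by rewrite predeqE => y /=; rewrite dotvC.
  by apply: preimage_closed; [move=> y _; exact: dotv_cont | exact: closed_le].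
have sub : closure S `<=` closure [set a | dotv a x <= 1].
  by apply: closureS => y Sy; exact: Hx.
by move: (sub a Sa); rewrite -((closure_id _).1 cl).
Qed.

Lemma closure_set1 (R : realType) n (x : 'rV[R]_n) : closure [set x] = [set x].
Proof.
apply/esym/closure_id; apply: accessible_closed_set1.
by apply: hausdorff_accessible; exact: norm_hausdorff.
Qed.

Definition H (R : realType) n (b : 'rV[R]_n) := [set x | dotv b x <= 1].
Definition seg (R : realType) n (b : 'rV[R]_n) :=
  [set x | exists t, 0 <= t <= 1 /\ x = t *: b].

Lemma H_polar (R : realType) n (b : 'rV[R]_n) : H b = polar [set b].
Proof. by rewrite predeqE => x; split => [Hx a ->|Hx] //; exact: Hx. Qed.

Lemma polar_seg (R : realType) n (b : 'rV[R]_n) : polar (seg b) = H b.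
Proof.
rewrite predeqE => x; split => [Hx|Hx a [t [/andP[t0 t1] ->]]].
  by apply: Hx; exists 1; rewrite scale1r ler01 lexx.
rewrite dotvZl; move: Hx; rewrite /H /= => Hx.
have [h|h] := leP (dotv b x) 0.
  have : t * dotv b x <= 0 by rewrite mulr_ge0_le0.
  lra.
have : t * dotv b x <= dotv b x by rewrite ler_piMl // ltW.
lra.
Qed.

Lemma polar_setT (R : realType) n (x : 'rV[R]_n) :
  (forall a, dotv a x <= 1) -> x = 0.
Proof.
move=> Hx; apply/eqP; apply/negP => /negP x0.
have := Hx ((2 / dotv x x) *: x); rewrite dotvZl mulrAC -mulrA divff ?mulr1.
  by move=> h; lra.
by rewrite gt_eqF // dotv_gt0.
Qed.

Lemma sub_polar2 (R : realType) n (S : set 'rV[R]_n) : S `<=` polar (polar S).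
Proof. by move=> a Sa x Hx; rewrite dotvC; exact: Hx. Qed.

Lemma perp_decomp (R : realType) n (b x : 'rV[R]_n) : b != 0 ->
  (forall w, dotv b w = 0 -> dotv w x <= 1) ->
  x = (dotv b x / dotv b b) *: b.
Proof.
move=> b0 Hx; set t := dotv b x / dotv b b.
have bb0 : dotv b b != 0 by rewrite gt_eqF // dotv_gt0.
set w := x - t *: b.
have bw : dotv b w = 0.
  by rewrite /w dotvBr dotvZr /t -mulrA mulVf // mulr1 subrr.
have wx : dotv w x = dotv w w.
  rewrite {2}/w dotvBr dotvZr (dotvC w b) bw mulr0 subr0 //.
apply/eqP; rewrite -subr_eq0 -/w; apply/negP => /negP w0.
have := Hx ((2 / dotv w w) *: w); rewrite dotvZr bw mulr0 => /(_ erefl).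
rewrite dotvZl wx mulrAC -mulrA divff ?mulr1; last by rewrite gt_eqF // dotv_gt0.
by move=> h; lra.
Qed.

Lemma polar_H (R : realType) n (b : 'rV[R]_n) : polar (H b) = seg b.
Proof.
rewrite predeqE => x; split => [Hx|]; last by rewrite -polar_seg; exact: sub_polar2.
have [b0|b0] := eqVneq b 0.
  subst b; exists 0; rewrite lexx ler01 scale0r; split => //.
  by apply: polar_setT => a; apply: Hx; rewrite /H /= dotv0l ler01.
have xE : x = (dotv b x / dotv b b) *: b.
  by apply: perp_decomp b0 _ => w bw; apply: Hx; rewrite /H /= bw ler01.
have bb0 : 0 < dotv b b by rewrite dotv_gt0.
exists (dotv b x / dotv b b); split => //.
have h1 : dotv b x <= dotv b b.
  have := Hx ((dotv b b)^-1 *: b); rewrite /H /= dotvZr mulVf ?gt_eqF //.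
  move=> /(_ (lexx _)); rewrite dotvZl -ler_pdivlMl ?invr_gt0 // invrK mulr1 //.
have h2 : 0 <= dotv b x.
  rewrite leNgt; apply/negP => d0.
  have := Hx ((2 / dotv b x) *: b); rewrite /H /= dotvZr dotvZl.
  have e : 2 / dotv b x * dotv b x = 2 by rewrite -mulrA mulVf ?lt_eqF // mulr1.
  rewrite e.
  have : 2 / dotv b x * dotv b b <= 0.
    by rewrite pmulr_lle0 // pmulr_rle0 // invr_le0 ltW.
  by move=> h3 /(_ (le_trans h3 ler01)) h4; move: h4; clear; lra.
apply/andP; split; first by rewrite divr_ge0 // ltW.
by rewrite ler_pdivrMr // mul1r.
Qed.

Definition Hyp (R : realType) n (f : 'rV[R]_n -> 'rV[R]_n) :=
  [/\ continuous f, injective f &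
    forall A : set 'rV[R]_n, K0 A -> closure (f @` polar A) = polar (closure (f @` A))].

Lemma K0T (R : realType) n : K0 (@setT 'rV[R]_n).
Proof. by split; [exact: closedT|split]. Qed.

Lemma K0_0 (R : realType) n : K0 [set (0 : 'rV[R]_n)].
Proof.
split; first by rewrite -closure_set1; exact: closed_closure.
by split => // x y t /= -> -> _ _; rewrite !scaler0 addr0.
Qed.

Lemma polar_set0 (R : realType) n : polar [set (0 : 'rV[R]_n)] = setT.
Proof. by rewrite predeqE => x; split => // _ a ->; rewrite dotv0l ler01. Qed.

Lemma polarT (R : realType) n : polar (@setT 'rV[R]_n) = [set 0].
Proof.
rewrite predeqE => x; split => [Hx|-> a _]; last by rewrite dotv0r ler01.
by apply: polar_setT => a; exact: Hx.
Qed.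

Lemma Hyp_f0 (R : realType) n (f : 'rV[R]_n -> 'rV[R]_n) : Hyp f -> f 0 = 0.
Proof.
case=> fc fi fh; have := fh _ (K0T R n).
rewrite polarT image_set1 closure_set1 => E.
by have := @polar0 _ _ (closure (range f)); rewrite -E => /esym.
Qed.

Lemma Hyp_dense (R : realType) n (f : 'rV[R]_n -> 'rV[R]_n) :
  Hyp f -> closure (range f) = setT.
Proof.
move=> Hf; have f0 := Hyp_f0 Hf; case: Hf => fc fi fh.
have := fh _ (K0_0 R n); rewrite polar_set0 image_set1 f0 closure_set1.
by rewrite polar_set0.
Qed.

Lemma Hyp_F (R : realType) n (f : 'rV[R]_n -> 'rV[R]_n) : Hyp f ->
  forall a b, dotv b a <= 1 -> dotv (f b) (f a) <= 1.
Proof.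
case=> fc fi fh a b ab.
have K : K0 (H b) by rewrite H_polar; exact: K0_polar.
have := fh _ K => E.
have hb : closure (f @` polar (H b)) (f b).
  by apply: subset_closure; exists b => //; rewrite H_polar; exact: sub_polar2.
rewrite E in hb; rewrite dotvC; apply: hb.
by apply: subset_closure; exists a.
Qed.

Definition Box (R : realType) n (r : R) := [set x : 'rV[R]_n | forall i, `|x ord0 i| <= r].

Lemma box_compact (R : realType) n (r : R) : compact (@Box R n r).
Proof.
have := @rV_compact R n (fun _ => `[-r, r]%classic) (fun _ => @segment_compact R (- r) r).
congr compact; rewrite predeqE => x; split => H i; have := H i => /=.
  by rewrite in_itv /= -ler_norml.
by rewrite in_itv /= -ler_norml.
Qed.

Lemma box_closed (R : realType) n (r : R) : closed (@Box R n r).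
Proof. by apply: compact_closed; [exact: norm_hausdorff | exact: box_compact]. Qed.

Lemma dotv_delta (R : realType) n i (x : 'rV[R]_n) :
  dotv (delta_mx ord0 i) x = x ord0 i.
Proof.
rewrite /dotv (bigD1 i) //= big1 ?addr0; first by rewrite mxE !eqxx mul1r.
by move=> j ji; rewrite mxE eqxx /= (negbTE ji) mul0r.
Qed.

Lemma norm_delta (R : realType) n i : `|delta_mx ord0 i : 'rV[R]_n| <= 1.
Proof.
apply: norm_le_coord => // j; rewrite mxE.
by case: (_ && _); rewrite ?normr1 ?normr0.
Qed.

Lemma Hyp_cpolar (R : realType) n (f : 'rV[R]_n -> 'rV[R]_n) : Hyp f ->
  forall A, K0 A -> compact (polar A) ->
  forall z, polar (f @` A) (f z) -> polar A z.
Proof.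
case=> fc fi fh A KA cA z Hz.
have cl : closed (f @` polar A).
  exact: compact_closed (@norm_hausdorff _ _) (continuous_compact (continuous_subspaceT fc) cA).
move: Hz; rewrite -polar_closure -fh // -((closure_id _).1 cl).
by case=> x Ax /fi <-.
Qed.

Lemma Hyp_proper (R : realType) n (f : 'rV[R]_n -> 'rV[R]_n) : Hyp f -> (0 < n)%N ->
  forall M, 0 < M -> exists r, 0 < r /\ forall z, ~ Box r z -> M < `|f z|.
Proof.
move=> Hf n0 M M0; have f0 := Hyp_f0 Hf; have Hf' := Hf; case: Hf' => fc fi fh.
have nM0 : 0 < n%:R * M by rewrite mulr_gt0 // ltr0n.
have e0 : 0 < (n%:R * M)^-1 by rewrite invr_gt0.
have := fc 0; move/(@cvgrPdist_lt R [the normedModType R of 'rV[R]_n] _ (nbhs (0 : 'rV[R]_n)) _ f) => /(_ _ e0).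
rewrite -(@nbhs_nbhs_norm R 'rV[R]_n) => -[d /= d0 Hd].
set Q := [set x : 'rV[R]_n | `|x| <= d / 2].
have KQ : K0 Q.
  split.
    have -> : Q = (@Num.Def.normr R _) @^-1` [set r | r <= d / 2] by [].
    by apply: preimage_closed; [move=> x _; exact: norm_continuous | exact: closed_le].
  split; last by rewrite /Q /= normr0 divr_ge0 // ltW.
  move=> x y t Qx Qy t0 t1; rewrite /Q /=; apply: le_trans (ler_normD _ _) _.
  rewrite !normrZ (ger0_norm t0) ger0_norm ?subr_ge0 //.
  have : (1 - t) * `|x| <= (1 - t) * (d / 2) by rewrite ler_wpM2l ?subr_ge0.
  have : t * `|y| <= t * (d / 2) by rewrite ler_wpM2l.
  by move=> h1 h2; move: h1 h2; clear; lra.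
have sQ : polar Q `<=` Box (2 / d).
  move=> x Hx i; set c := d / 2 * Num.sg (x ord0 i).
  have Qa : Q (c *: delta_mx ord0 i).
    rewrite /Q /= normrZ /c normrM normr_sg (ger0_norm (divr_ge0 (ltW d0) _)) //.
    have : `|delta_mx ord0 i : 'rV[R]_n| <= 1 by exact: norm_delta.
    have : ((x ord0 i != 0)%:R : R) <= 1 by case: (_ != _); rewrite ?ler01 ?lexx.
    have : 0 <= d / 2 by rewrite divr_ge0 // ltW.
    move=> h0 h1 h2; rewrite -(mulrA (d / 2)) -[leRHS]mulr1 ler_wpM2l //.
    by rewrite (le_trans (ler_wpM2l (ler0n _ _) h2)) // mulr1.
  have := Hx _ Qa; rewrite dotvZl dotv_delta /c -(mulrA (d / 2)) -normrEsg => h.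
  have -> : `|x ord0 i| = 2 / d * (d / 2 * `|x ord0 i|) by field; rewrite gt_eqF.
  by rewrite ler_piMr // divr_ge0 // ltW.
have cQ : compact (polar Q).
  by apply: (subclosed_compact _ _ sQ); [exact: polar_closed | exact: box_compact].
exists (2 / d); split; first by rewrite divr_gt0.
move=> z nz; rewrite ltNge; apply/negP => fzM; apply: nz; apply: sQ.
apply: (Hyp_cpolar Hf KQ cQ) => _ [x Qx <-].
have : `|f x| < (n%:R * M)^-1.
  have : ball_ Num.Def.normr 0 d x.
    by rewrite /ball_ /= sub0r normrN; apply: le_lt_trans Qx _; rewrite ltr_pdivrMr // ltr_pMr // ltr1n.
  by move/Hd; rewrite /= f0 sub0r normrN.
move=> hfx; apply: le_trans (ler_norm _) _; apply: le_trans (dotv_bound _ _) _.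
apply: (@le_trans _ _ (n%:R * ((n%:R * M)^-1 * M))); last first.
  have nR0 : (n%:R : R) != 0 by rewrite gt_eqF // ltr0n.
  have M0' : M != 0 by rewrite gt_eqF.
  by rewrite le_eqVlt; apply/orP; left; apply/eqP; field; apply/andP; split.
by rewrite ler_wpM2l // ler_pM // ltW.
Qed.

Lemma Hyp_closed_map (R : realType) n (f : 'rV[R]_n -> 'rV[R]_n) : Hyp f -> (0 < n)%N ->
  forall C, closed C -> closed (f @` C).
Proof.
move=> Hf n0 C cC; have Hf' := Hf; case: Hf' => fc fi fh.
apply/closure_id; apply/seteqP; split; first exact: subset_closure.
move=> y cy.
have M0 : 0 < `|y| + 1 by rewrite ltr_wpDl.
have [r [r0 Hr]] := Hyp_proper Hf n0 M0.
set D := C `&` Box r.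
have cD : compact D.
  apply: (subclosed_compact _ (@box_compact R n r) (@subIsetr _ _ _)).
  by apply: closedI => //; exact: (@box_closed R n r).
have hD : closed (f @` D).
  by apply: compact_closed; [exact: norm_hausdorff|exact: continuous_compact (continuous_subspaceT fc) cD].
suff : closure (f @` D) y.
  by rewrite -((closure_id _).1 hD) => -[x [Cx _] <-]; exists x.
move=> B nB.
have nB' : nbhs y (B `&` ball_ Num.Def.normr y 1).
  by apply: filterI => //; exact: (@nbhs_ball_norm _ _ y 1%:pos).
have [_ [[x Cx <-] [Bfx byfx]]] := cy _ nB'.
exists (f x); split => //; exists x => //; split => //.
case: (pselect (Box r x)) => // nb; have := Hr _ nb.
have : `|f x| <= `|y| + `|y - f x|.
  by have := ler_normB y (y - f x); rewrite opprB addrC subrK.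
move: byfx; rewrite /ball_ /= => h1 h2 h3.
by move: h1 h2 h3; clear; lra.
Qed.

Lemma Hyp_surj (R : realType) n (f : 'rV[R]_n -> 'rV[R]_n) : Hyp f -> (0 < n)%N ->
  forall y, exists x, f x = y.
Proof.
move=> Hf n0 y.
have cl := Hyp_closed_map Hf n0 (@closedT _).
have := Hyp_dense Hf; rewrite -((closure_id _).1 cl) => E.
have : range f y by rewrite E.
by case=> x _ <-; exists x.
Qed.

Lemma Hyp_eq (R : realType) n (f : 'rV[R]_n -> 'rV[R]_n) : Hyp f -> (0 < n)%N ->
  forall A, K0 A -> f @` polar A = polar (f @` A).
Proof.
move=> Hf n0 A KA; have Hf' := Hf; case: Hf' => fc fi fh.
have := fh A KA.
rewrite -((closure_id _).1 (Hyp_closed_map Hf n0 (@polar_closed _ _ A))).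
by rewrite -((closure_id _).1 (Hyp_closed_map Hf n0 KA.1)).
Qed.

Lemma Hyp_inv_cont (R : realType) n (f g : 'rV[R]_n -> 'rV[R]_n) : Hyp f -> (0 < n)%N ->
  cancel g f -> continuous g.
Proof.
move=> Hf n0 gf; have Hf' := Hf; case: Hf' => fc fi fh.
have fg : cancel f g by move=> x; apply: fi; rewrite gf.
apply/continuousP => A oA.
have -> : g @^-1` A = ~` (f @` ~` A).
  rewrite predeqE => y; split.
    by move=> Ay [x nAx fxy]; apply: nAx; rewrite -(fg x) fxy.
  move=> h; apply/not_notP => nA; apply: h; exists (g y) => //.
apply: closed_openC; apply: (Hyp_closed_map Hf n0).
by rewrite closedC.
Qed.

Lemma K0_H (R : realType) n (b : 'rV[R]_n) : K0 (H b).
Proof. by rewrite H_polar; exact: K0_polar. Qed.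

Lemma K0_seg (R : realType) n (b : 'rV[R]_n) : K0 (seg b).
Proof. by rewrite -polar_H; exact: K0_polar. Qed.

Lemma Hyp_inv (R : realType) n (f : 'rV[R]_n -> 'rV[R]_n) : Hyp f -> (0 < n)%N ->
  exists g, cancel g f /\ cancel f g.
Proof.
move=> Hf n0; have sj := Hyp_surj Hf n0.
exists (fun y => projT1 (cid (sj y))); split => [y|x]; first exact: projT2 (cid (sj y)).
by case: Hf => _ fi _; apply: fi; exact: projT2 (cid (sj (f x))).
Qed.

Lemma Hyp_seg (R : realType) n (f : 'rV[R]_n -> 'rV[R]_n) : Hyp f -> (0 < n)%N ->
  forall b, f @` seg b = seg (f b).
Proof.
move=> Hf n0 b; have f0 := Hyp_f0 Hf; have Hf' := Hf; case: Hf' => fc fi fh.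
have [g [gf fg]] := Hyp_inv Hf n0.
have gc := Hyp_inv_cont Hf n0 gf.
have E1 : f @` seg b = polar (f @` H b) by rewrite -polar_H; exact: Hyp_eq (K0_H b).
have sub1 : seg (f b) `<=` f @` seg b.
  rewrite E1 -polar_H; apply: polar_anti => _ [a Ha <-].
  by rewrite /H /=; exact: Hyp_F.
apply/seteqP; split => //.
have [->|b0] := eqVneq b 0.
  by move=> _ [x [t [_ ->]] <-]; rewrite scaler0 f0; exists 0; rewrite scaler0 lexx ler01.
have bb0 : 0 < dotv b b by rewrite dotv_gt0.
move=> _ [x [t0 [t01 ->]] <-].
pose tau s := dotv b (g (s *: f b)) * (dotv b b)^-1.
have tauc : continuous tau.
  move=> s; rewrite /tau; apply: (@continuousM R R (fun s => dotv b (g (s *: f b))) (fun=> (dotv b b)^-1) s); last exact: cst_continuous.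
  apply: (@continuous_comp R _ R (fun s => g (s *: f b)) (dotv b) s); last exact: dotv_cont.
  apply: (@continuous_comp R _ _ (fun s : R => s *: f b) g s); last exact: gc.
  exact: scalel_continuous.
have g0 : g 0 = 0 by rewrite -f0 fg.
have tau0 : tau 0 = 0 by rewrite /tau scale0r g0 dotv0r mul0r.
have tau1 : tau 1 = 1 by rewrite /tau scale1r fg divff // gt_eqF.
have [s s01 taus] : exists2 s, s \in `[0, 1] & tau s = t0.
  apply: IVT => //; first exact: continuous_subspaceT.
  by rewrite tau0 tau1 min_l ?max_r ?ler01.
have : seg (f b) (s *: f b) by exists s; split => //; move: s01; rewrite in_itv.
move/sub1 => [y [t' [_ ->]] fy].
have gs : g (s *: f b) = t' *: b by rewrite -fy fg.
move: taus; rewrite /tau gs dotvZr -mulrA divff ?gt_eqF // mulr1 => tt.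
by exists s; split; [move: s01; rewrite in_itv | rewrite -tt -fy].
Qed.

Lemma Hyp_H (R : realType) n (f : 'rV[R]_n -> 'rV[R]_n) : Hyp f -> (0 < n)%N ->
  forall b, f @` H b = H (f b).
Proof.
move=> Hf n0 b.
rewrite -{1}polar_seg (Hyp_eq Hf n0 (K0_seg b)) (Hyp_seg Hf n0).
exact: polar_seg.
Qed.

Lemma Hyp_P (R : realType) n (f : 'rV[R]_n -> 'rV[R]_n) : Hyp f -> (0 < n)%N ->
  forall a b, dotv b a <= 1 <-> dotv (f b) (f a) <= 1.
Proof.
move=> Hf n0 a b; split; first exact: Hyp_F.
move=> h; have : H (f b) (f a) by [].
rewrite -(Hyp_H Hf n0) => -[a' Ha' fa].
by case: Hf => _ fi _; rewrite -(fi _ _ fa).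
Qed.

Lemma Hyp_segP (R : realType) n (f : 'rV[R]_n -> 'rV[R]_n) : Hyp f -> (0 < n)%N ->
  forall b x, seg b x <-> seg (f b) (f x).
Proof.
move=> Hf n0 b x; rewrite -(Hyp_seg Hf n0); split; first by move=> h; exists x.
by case: Hf => _ fi _ [y sy /fi <-].
Qed.

Lemma Hyp_inj0 (R : realType) n (f : 'rV[R]_n -> 'rV[R]_n) : Hyp f ->
  forall b, f b = 0 -> b = 0.
Proof.
move=> Hf b fb; have f0 := Hyp_f0 Hf; case: Hf => _ fi _.
by apply: fi; rewrite fb f0.
Qed.

Lemma Hyp_ray_img (R : realType) n (f : 'rV[R]_n -> 'rV[R]_n) : Hyp f -> (0 < n)%N ->
  forall b t, 0 <= t -> exists mu, 0 <= mu /\ f (t *: b) = mu *: f b.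
Proof.
move=> Hf n0 b t t0; have f0 := Hyp_f0 Hf.
have [t1|t1] := leP t 1.
  have : seg (f b) (f (t *: b)).
    by apply: (Hyp_segP Hf n0 b (t *: b)).1; exists t; split => //; apply/andP; split.
  by case=> mu [/andP[mu0 _] ->]; exists mu.
have tn0 : t != 0 by rewrite gt_eqF // (lt_trans ltr01).
have : seg (f (t *: b)) (f b).
  apply: (Hyp_segP Hf n0 _ _).1; exists t^-1; split; last by rewrite scalerA mulVf // scale1r.
  by rewrite invr_ge0 t0 /= invf_le1 ?ltW // (lt_trans ltr01).
case=> la [/andP[la0 _] E].
have [la_0|la_n0] := eqVneq la 0.
  move: E; rewrite la_0 scale0r => /(Hyp_inj0 Hf) ->.
  by exists 0; rewrite lexx scaler0 f0 scaler0.
exists la^-1; rewrite invr_ge0 la0; split => //.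
by rewrite E scalerA mulVf // scale1r.
Qed.

Lemma Hyp_ray_surj (R : realType) n (f : 'rV[R]_n -> 'rV[R]_n) : Hyp f -> (0 < n)%N ->
  forall b s, 0 <= s -> exists t, 0 <= t /\ f (t *: b) = s *: f b.
Proof.
move=> Hf n0 b s s0; have f0 := Hyp_f0 Hf.
have [s1|s1] := leP s 1.
  have : (f @` seg b) (s *: f b) by rewrite (Hyp_seg Hf n0); exists s; split => //; apply/andP; split.
  by case=> _ [t [/andP[t0 _] ->]] <-; exists t.
have [z fz] := Hyp_surj Hf n0 (s *: f b).
have sn0 : s != 0 by rewrite gt_eqF // (lt_trans ltr01).
have : seg (f z) (f b).
  exists s^-1; split; last by rewrite fz scalerA mulVf // scale1r.
  by rewrite invr_ge0 s0 /= invf_le1 ?ltW // (lt_trans ltr01).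
move/(Hyp_segP Hf n0 z b).2 => [la [/andP[la0 _] E]].
have [la_0|la_n0] := eqVneq la 0.
  move: E; rewrite la_0 scale0r => ->.
  by exists 0; rewrite lexx scaler0 f0 scaler0.
exists la^-1; rewrite invr_ge0 la0; split => //.
by rewrite {1}E scalerA mulVf // scale1r fz.
Qed.

Lemma Hyp_O1 (R : realType) n (f : 'rV[R]_n -> 'rV[R]_n) : Hyp f -> (0 < n)%N ->
  forall b x, dotv b x = 0 -> dotv (f b) (f x) <= 0.
Proof.
move=> Hf n0 b x bx; rewrite leNgt; apply/negP => d0.
set d := dotv (f b) (f x) in d0.
have [t [t0 ft]] := Hyp_ray_surj Hf n0 b (divr_ge0 (ler0n _ 2) (ltW d0)).
have : dotv (t *: b) x <= 1 by rewrite dotvZl bx mulr0 ler01.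
move/(Hyp_P Hf n0); rewrite ft dotvZl -/d -mulrA mulVf ?gt_eqF // mulr1.
by move=> h; move: h; clear; lra.
Qed.

Lemma polar_perp (R : realType) n (b z : 'rV[R]_n) : b != 0 ->
  (forall w, dotv b w = 0 -> dotv w z <= 1) -> exists t, z = t *: b.
Proof. by move=> b0 h; exists (dotv b z / dotv b b); exact: perp_decomp. Qed.

Lemma Hyp_N (R : realType) n (f : 'rV[R]_n -> 'rV[R]_n) : Hyp f -> (0 < n)%N ->
  forall b, b != 0 -> exists c, 0 < c /\ f (- b) = - c *: f b.
Proof.
move=> Hf n0 b b0; have f0 := Hyp_f0 Hf; have Hf' := Hf; case: Hf' => _ fi _.
have [z fz] := Hyp_surj Hf n0 (f b + f (- b)).
have : exists t, z = t *: b.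
  apply: polar_perp b0 _ => w bw; apply/(Hyp_P Hf n0); rewrite fz dotvDr.
  have h1 := Hyp_O1 Hf n0 bw.
  have h2 : dotv (- b) w = 0 by rewrite dotvNl bw oppr0.
  have h3 := Hyp_O1 Hf n0 h2.
  by rewrite !(dotvC (f w)); move: h1 h3; clear; lra.
case=> t zt.
have [t0|t0] := leP 0 t.
  have [mu [mu0 E]] := Hyp_ray_img Hf n0 b t0.
  move: fz; rewrite zt E => E2.
  have E3 : f (- b) = (mu - 1) *: f b by rewrite scalerBl scale1r E2 addrC addKr.
  have [mu1|mu1] := leP 1 mu.
    have m1' : 0 <= mu - 1 by rewrite subr_ge0.
    have [t' [t'0 E4]] := Hyp_ray_surj Hf n0 b m1'.
    move: E4; rewrite -E3 => /fi /eqP; rewrite -subr_eq0 opprK -{2}(scale1r b) -scalerDl.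
    rewrite scaler_eq0 (negbTE b0) orbF => /eqP h; move: h t'0; clear; lra.
  by exists (1 - mu); split; [rewrite subr_gt0 | rewrite E3 opprB].
have mt0 : 0 <= - t by rewrite oppr_ge0 ltW.
have [mu [mu0 E]] := Hyp_ray_img Hf n0 (- b) mt0.
have tb : t *: b = (- t) *: (- b) by rewrite scaleNr scalerN opprK.
move: fz; rewrite zt tb E => E2.
have E3 : f b = (mu - 1) *: f (- b) by rewrite scalerBl scale1r E2 addrK.
have [mu1|mu1] := leP 1 mu.
  have m1' : 0 <= mu - 1 by rewrite subr_ge0.
  have [t' [t'0 E4]] := Hyp_ray_surj Hf n0 (- b) m1'.
  move: E4; rewrite -E3 => /fi /eqP; rewrite scalerN -subr_eq0 -opprD oppr_eq0 -{2}(scale1r b) -scalerDl.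
  rewrite scaler_eq0 (negbTE b0) orbF => /eqP h; move: h t'0; clear; lra.
have m1 : mu - 1 != 0 by rewrite subr_eq0 lt_eqF.
exists (1 - mu)^-1; split; first by rewrite invr_gt0 subr_gt0.
have m2 : 1 - mu != 0 by rewrite subr_eq0 gt_eqF.
rewrite E3 scalerA (_ : - (1 - mu)^-1 * (mu - 1) = 1) ?scale1r //.
by field.
Qed.

Lemma Hyp_O2 (R : realType) n (f : 'rV[R]_n -> 'rV[R]_n) : Hyp f -> (0 < n)%N ->
  forall b x, dotv b x = 0 -> dotv (f b) (f x) = 0.
Proof.
move=> Hf n0 b x bx; have f0 := Hyp_f0 Hf.
have [->|b0] := eqVneq b 0; first by rewrite f0 dotv0l.
have h1 := Hyp_O1 Hf n0 bx.
have h2 : dotv (- b) x = 0 by rewrite dotvNl bx oppr0.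
have h3 := Hyp_O1 Hf n0 h2.
have [c [c0 E]] := Hyp_N Hf n0 b0.
move: h3; rewrite E dotvZl => h3.
apply/eqP; rewrite eq_le h1 /=.
by move: h3; rewrite mulNr oppr_le0 pmulr_rge0.
Qed.

Lemma Hyp_E (R : realType) n (f : 'rV[R]_n -> 'rV[R]_n) : Hyp f -> (0 < n)%N ->
  forall a x, dotv a x = 1 -> dotv (f a) (f x) = 1.
Proof.
move=> Hf n0 a x ax; have Hf' := Hf; case: Hf' => fc fi _.
apply/eqP; rewrite eq_le; apply/andP; split.
  by apply: (Hyp_P Hf n0 x a).1; rewrite ax.
rewrite leNgt; apply/negP => d1.
pose phi s := dotv (f a) (f (s *: x)).
have phic : continuous phi.
  move=> s; apply: (@continuous_comp R _ R (fun s => f (s *: x)) (dotv (f a)) s); last exact: dotv_cont.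
  apply: (@continuous_comp R _ _ (fun s : R => s *: x) f s); last exact: fc.
  exact: scalel_continuous.
have e0 : 0 < 1 - dotv (f a) (f x) by rewrite subr_gt0.
have := phic 1; move/(@cvgrPdist_lt _ _ _ (nbhs (1:R)) _ phi) => /(_ _ e0).
rewrite -(@nbhs_nbhs_norm R R) => -[d /= d0 Hd].
have : ball_ Num.Def.normr 1 d (1 + d / 2).
  by rewrite /ball_ /= opprD addrA subrr sub0r normrN ger0_norm ?divr_ge0 ?ltW // ltr_pdivrMr // ltr_pMr // ltr1n.
move/Hd; rewrite /= /phi scale1r.
have h1 : ~ (dotv (f a) (f ((1 + d / 2) *: x)) <= 1).
  move/(Hyp_P Hf n0 ((1 + d / 2) *: x) a).2; rewrite dotvZr ax mulr1.
  have : 0 < d / 2 by rewrite divr_gt0.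
  by move=> h1 h2; move: h1 h2; clear; lra.
move=> h2; apply: h1; rewrite distrC in h2.
move: h2; set u := dotv (f a) (f ((1 + d / 2) *: x)); set v := dotv (f a) (f x).
move=> h2; have h3 := ler_norm (u - v); move: h2 h3; clear; lra.
Qed.

Lemma alg_id (R : realType) (phi psi : R -> R) :
  phi 1 = 1 -> psi 1 = 1 ->
  (forall a b t, a + t * b = 1 -> phi a + psi t * psi b = 1) ->
  (forall a b t, a + t * b = 1 -> psi a + phi t * phi b = 1) ->
  forall x, phi x = x.
Proof.
move=> p1 q1 A B.
have s1 b : phi (1 - b) = 1 - psi b.
  by have := A (1 - b) b 1; rewrite q1 mul1r subrK => /(_ erefl) h; lra.
have s2 b : psi (1 - b) = 1 - phi b.
  by have := B (1 - b) b 1; rewrite p1 mul1r subrK => /(_ erefl) h; lra.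
have m1 t b : psi (t * b) = psi t * psi b.
  have := A (1 - t * b) b t; rewrite subrK => /(_ erefl); rewrite s1 => h.
  by move: h; set u := psi (t * b); set v := psi t * psi b; move=> h; lra.
have m2 t b : phi (t * b) = phi t * phi b.
  have := B (1 - t * b) b t; rewrite subrK => /(_ erefl); rewrite s2 => h.
  by move: h; set u := phi (t * b); set v := phi t * phi b; move=> h; lra.
have q2 : psi 2 = 1 - phi (- 1) by rewrite -s2 opprK.
have p2 : phi 2 = 1 - psi (- 1) by rewrite -s1 opprK.
have pm1 : phi (- 1) = - 1.
  have h : phi (- 1) * phi (- 1) = 1 by rewrite -m2 mulrNN mul1r.
  have : psi 2 * psi (2^-1) = 1 by rewrite -m1 divff ?q1 // pnatr_eq0.
  rewrite q2 => h2.
  have : (phi (-1) - 1) * (phi (-1) + 1) = 0 by rewrite mulrDr !mulrBl h; ring.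
  move/eqP; rewrite mulf_eq0 => /orP[|]; rewrite ?subr_eq0 ?addr_eq0 => /eqP h3 //.
  by move: h2; rewrite h3 subrr mul0r => /eqP; rewrite eq_sym oner_eq0.
have qm1 : psi (- 1) = - 1.
  have h : psi (- 1) * psi (- 1) = 1 by rewrite -m1 mulrNN mul1r.
  have : phi 2 * phi (2^-1) = 1 by rewrite -m2 divff ?p1 // pnatr_eq0.
  rewrite p2 => h2.
  have : (psi (-1) - 1) * (psi (-1) + 1) = 0 by rewrite mulrDr !mulrBl h; ring.
  move/eqP; rewrite mulf_eq0 => /orP[|]; rewrite ?subr_eq0 ?addr_eq0 => /eqP h3 //.
  by move: h2; rewrite h3 subrr mul0r => /eqP; rewrite eq_sym oner_eq0.
have r1 x : psi x = 1 + phi (x - 1).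
  have := s2 (1 - x); rewrite opprB addrC subrK => ->.
  by rewrite (_ : 1 - x = -1 * (x - 1)) ?m2 ?pm1; [ring|ring].
have r2 x : phi x = 1 + psi (x - 1).
  have := s1 (1 - x); rewrite opprB addrC subrK => ->.
  by rewrite (_ : 1 - x = -1 * (x - 1)) ?m1 ?qm1; [ring|ring].
have P2 : phi 2 = 2 by rewrite r2 (_ : 2 - 1 = 1) ?q1 //; ring.
have Q2 : psi 2 = 2 by rewrite r1 (_ : 2 - 1 = 1) ?p1 //; ring.
have sh z : phi (z + 1) = phi z + 1.
  have := m1 2 ((z + 2) / 2); rewrite Q2 !r1.
  rewrite (_ : 2 * ((z + 2) / 2) - 1 = z + 1); last by field.
  rewrite (_ : (z + 2) / 2 - 1 = z / 2); last by field.
  have -> : 2 * (1 + phi (z / 2)) = 2 + phi (2 * (z / 2)) by rewrite (m2 2 (z / 2)) P2; ring.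
  rewrite (_ : 2 * (z / 2) = z); last by field.
  by move=> h; lra.
have p0 : phi 0 = 0 by rewrite r2 sub0r qm1; ring.
have add x y : phi (x + y) = phi x + phi y.
  have [->|y0] := eqVneq y 0.
    by rewrite addr0 p0 addr0.
  have -> : x + y = y * (x / y + 1) by field.
  by rewrite m2 sh mulrDr -m2 mulr1 (_ : y * (x / y) = x) //; field.
have pos s : 0 <= s -> 0 <= phi s.
  move=> s0; rewrite -(sqr_sqrtr s0) expr2 m2 -expr2; exact: sqr_ge0.
have mono x y : x <= y -> phi x <= phi y.
  by move=> xy; rewrite -(subrK x y) add addrC lerDl; apply: pos; rewrite subr_ge0.
have neg x : phi (- x) = - phi x.
  by have := add x (- x); rewrite subrr p0 => h; lra.
have nat k : phi k%:R = k%:R.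
  by elim: k => [|k IH]; rewrite ?p0 // -addn1 natrD add IH p1.
have int z : phi z%:~R = z%:~R.
  case: z => k; first by rewrite -pmulrn nat.
  by rewrite NegzE -nmulrn neg nat.
have rat q : phi (ratr q) = ratr q.
  rewrite /ratr; set p := (numq q)%:~R; set d := (denq q)%:~R.
  have d0 : d != 0 by rewrite /d intr_eq0 denq_neq0.
  have : phi (p / d) * phi d = p by rewrite -m2 mulfVK // int.
  by rewrite /d (int (denq q)) => h; rewrite -[in RHS]h mulfK.
move=> x; case: (ltgtP (phi x) x) => // h.
  have [q] := rat_in_itvoo h; rewrite in_itv /= => /andP[h1 h2].
  by have := mono _ _ (ltW h2); rewrite rat => h3; have := lt_le_trans h1 h3; rewrite ltxx.
have [q] := rat_in_itvoo h; rewrite in_itv /= => /andP[h1 h2].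
by have := mono _ _ (ltW h1); rewrite rat => h3; have := le_lt_trans h3 h2; rewrite ltxx.
Qed.

Lemma dotv_ee (R : realType) n (j k : 'I_n) :
  dotv (delta_mx ord0 j : 'rV[R]_n) (delta_mx ord0 k) = (j == k)%:R.
Proof. by rewrite dotv_delta mxE eqxx. Qed.

Lemma orthonormal_expand (R : realType) n (u : 'I_n -> 'rV[R]_n) :
  (forall j k, dotv (u j) (u k) = (j == k)%:R) ->
  (\matrix_k u k) *m (\matrix_k u k)^T = 1%:M /\
  forall y, y = \sum_k dotv y (u k) *: u k.
Proof.
move=> uu; set M := \matrix_k u k.
have MMT : M *m M^T = 1%:M.
  apply/matrixP => j k; rewrite !mxE -uu /dotv; apply: eq_bigr => l _.
  by rewrite !mxE.
split => // y.
have MTM := mulmx1C MMT.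
rewrite -{1}(mulmx1 y) -MTM mulmxA mulmx_sum_row; apply: eq_bigr => k _.
rewrite rowK; congr (_ *: _); rewrite mxE /dotv; apply: eq_bigr => l _.
by rewrite !mxE.
Qed.

Definition ev (R : realType) n (k : 'I_n) : 'rV[R]_n := delta_mx ord0 k.

Lemma Hyp_uu (R : realType) n (f : 'rV[R]_n -> 'rV[R]_n) : Hyp f -> (0 < n)%N ->
  forall j k, dotv (f (ev R j)) (f (ev R k)) = (j == k)%:R.
Proof.
move=> Hf n0 j k; have [<-|jk] := eqVneq j k.
  by rewrite (Hyp_E Hf n0) // /ev dotv_ee eqxx.
by rewrite (Hyp_O2 Hf n0) // /ev dotv_ee (negbTE jk).
Qed.

Lemma Hyp_expand (R : realType) n (f : 'rV[R]_n -> 'rV[R]_n) : Hyp f -> (0 < n)%N ->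
  forall y, y = \sum_k dotv y (f (ev R k)) *: f (ev R k).
Proof. by move=> Hf n0; case: (orthonormal_expand (Hyp_uu Hf n0)). Qed.

Lemma Hyp_fte (R : realType) n (f : 'rV[R]_n -> 'rV[R]_n) : Hyp f -> (0 < n)%N ->
  forall k t, f (t *: ev R k) = dotv (f (t *: ev R k)) (f (ev R k)) *: f (ev R k).
Proof.
move=> Hf n0 k t; rewrite {1}(Hyp_expand Hf n0 (f (t *: ev R k))) (bigD1 k) //=.
rewrite big1 ?addr0 // => j jk; rewrite dotvC (Hyp_O2 Hf n0) ?scale0r //.
by rewrite /ev dotvZr dotv_ee (negbTE jk) mulr0.
Qed.

Lemma Hyp_coef (R : realType) n (f : 'rV[R]_n -> 'rV[R]_n) : Hyp f -> (0 < n)%N ->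
  forall x k, dotv (f x) (f (ev R k)) =
    dotv (f (x ord0 k *: ev R k)) (f (ev R k)).
Proof.
move=> Hf n0 x k; have f0 := Hyp_f0 Hf.
set h := fun t => dotv (f (t *: ev R k)) (f (ev R k)).
have [c0|c0] := eqVneq (x ord0 k) 0.
  rewrite c0 scale0r f0 dotv0l dotvC (Hyp_O2 Hf n0) //.
  by rewrite /ev dotv_delta.
set c := x ord0 k.
have E1 : h c^-1 * dotv (f x) (f (ev R k)) = 1.
  rewrite -dotvZr -(Hyp_fte Hf n0); apply: (Hyp_E Hf n0).
  by rewrite dotvZr dotvC /ev dotv_delta -/c mulVf.
have E2 : h c^-1 * h c = 1.
  have key : dotv (f (c *: ev R k)) (f (c^-1 *: ev R k)) = 1.
    by apply: (Hyp_E Hf n0); rewrite dotvZl dotvZr /ev dotv_ee eqxx mulr1 mulfV.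
  move: key; rewrite (Hyp_fte Hf n0 k c) (Hyp_fte Hf n0 k c^-1) dotvZl dotvZr.
  by rewrite (Hyp_uu Hf n0) eqxx mulr1 mulrC.
have hc0 : h c^-1 != 0 by apply/eqP => h0; move: E2; rewrite h0 mul0r => /eqP; rewrite eq_sym oner_eq0.
by apply: (mulfI hc0); rewrite E1 E2.
Qed.

Lemma dotv_sumr (R : realType) n (u : 'rV[R]_n) I (r : seq I) (P : pred I) (F : I -> 'rV[R]_n) :
  dotv u (\sum_(i <- r | P i) F i) = \sum_(i <- r | P i) dotv u (F i).
Proof. exact: (big_morph _ (dotvDr u) (dotv0r u)). Qed.

Lemma ev_dot1 (R : realType) n (i : 'I_n) : dotv (ev R i) (ev R i) = 1.
Proof. by rewrite /ev dotv_ee eqxx. Qed.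

Lemma ev_dot0 (R : realType) n (i j : 'I_n) : i != j -> dotv (ev R i) (ev R j) = 0.
Proof. by move=> ij; rewrite /ev dotv_ee (negbTE ij). Qed.

Lemma ev_coord (R : realType) n (i k : 'I_n) : (ev R i) ord0 k = (k == i)%:R.
Proof. by rewrite /ev mxE eqxx. Qed.

Lemma Hyp_rel (R : realType) n (f : 'rV[R]_n -> 'rV[R]_n) : Hyp f -> (0 < n)%N ->
  forall i j, i != j -> forall a b t, a + t * b = 1 ->
  dotv (f (a *: ev R i)) (f (ev R i)) +
  dotv (f (t *: ev R j)) (f (ev R j)) * dotv (f (b *: ev R j)) (f (ev R j)) = 1.
Proof.
move=> Hf n0 i j ij a b t abt; have f0 := Hyp_f0 Hf.
set h := fun k (s : R) => dotv (f (s *: ev R k)) (f (ev R k)).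
have ji : j != i by rewrite eq_sym.
set x := ev R i + t *: ev R j; set y := a *: ev R i + b *: ev R j.
have dxy : dotv x y = 1.
  rewrite /x /y !dotvDl !dotvDr !dotvZl !dotvZr !ev_dot1 (ev_dot0 _ ij) (ev_dot0 _ ji).
  by rewrite !mulr1 !mulr0 !addr0 add0r.
have := Hyp_E Hf n0 dxy.
rewrite {1}(Hyp_expand Hf n0 (f y)) dotv_sumr.
under eq_bigr => k _ do rewrite dotvZr (Hyp_coef Hf n0 y) (Hyp_coef Hf n0 x) -/(h k _) -/(h k _).
rewrite (bigD1 i) //= (bigD1 j) //= big1 ?addr0; last first.
  move=> k /andP[ki kj].
  have xk : x ord0 k = 0.
    by rewrite /x !mxE eqxx /= (negbTE ki) (negbTE kj) /= ?mulr0n mulr0 addr0.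
  by rewrite xk /h scale0r f0 dotv0l mulr0.
have xi : x ord0 i = 1 by rewrite /x !mxE !eqxx /= (negbTE ij) /= ?mulr1n ?mulr0n mulr0 addr0.
have xj : x ord0 j = t by rewrite /x !mxE !eqxx /= (negbTE ji) /= ?mulr1n ?mulr0n mulr1 add0r.
have yi : y ord0 i = a by rewrite /y !mxE !eqxx /= (negbTE ij) /= ?mulr1n ?mulr0n mulr0 mulr1 addr0.
have yj : y ord0 j = b by rewrite /y !mxE !eqxx /= (negbTE ji) /= ?mulr1n ?mulr0n mulr0 mulr1 add0r.
have hi1 : h i 1 = 1 by rewrite /h scale1r (Hyp_uu Hf n0) eqxx.
rewrite xi xj yi yj hi1 mulr1 => <-.
by rewrite [h j b * _]mulrC.
Qed.

Unset Implicit Arguments.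

Theorem proposition5p4 (R : realType) (n : nat) (f : 'rV[R]_n -> 'rV[R]_n) :
  (2 <= n)%N ->
  continuous f ->
  injective f ->
  (forall A : set 'rV[R]_n, K0 A ->
     closure (f @` polar A) = polar (closure (f @` A))) ->
  orthogonal_linear f.
Proof.
move=> n2 fc fi fh.
have Hf : Hyp f by split.
have n0 : (0 < n)%N by apply: leq_trans n2.
set h := fun k (s : R) => dotv (f (s *: ev R k)) (f (ev R k)).
have h1 k : h k 1 = 1 by rewrite /h scale1r (Hyp_uu Hf n0) eqxx.
have hid k t : h k t = t.
  pose i0 : 'I_n := Ordinal n0.
  pose i1 : 'I_n := Ordinal n2.
  have [j kj] : exists j, k != j.
    have [ki0|ki0] := eqVneq k i0; last by exists i0.
    by exists i1; rewrite ki0.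
  apply: (@alg_id R (h k) (h j)); rewrite ?h1 //.
    by move=> a b s abs; rewrite /h; exact: (Hyp_rel Hf n0 kj abs).
  have jk : j != k by rewrite eq_sym.
  by move=> a b s abs; rewrite /h; exact: (Hyp_rel Hf n0 jk abs).
have [MMT _] := orthonormal_expand (Hyp_uu Hf n0).
exists (\matrix_k f (ev R k)); split => // x.
rewrite mulmx_sum_row {1}(Hyp_expand Hf n0 (f x)); apply: eq_bigr => k _.
by rewrite rowK (Hyp_coef Hf n0) -/(h k _) hid.
Qed.
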